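(* For every integer $m\ge0$, the following identity of rational functions in indeterminates $x,y$ holds: $$\sum_{r=0}^{m}\sum_{s=0}^{m-r}\binom{m-r+1}{s}\binom{m-s}{r}\frac{x^ry^s}{(1-x)^{r+s}(1-y)^{r+s}}=\frac{1-x^{m+2}y^{m+2}-x(1-x^{m+1}y^{m+1})-(1-xy)y^{m+1}}{(1-xy)(1-x)^{m+1}(1-y)^{m+1}}.$$ *)

(* Defs.v *)
(* Rational functions in two indeterminates x, y over Q:
   the fraction field of Q[x][y] = {poly {poly rat}}. *)
From mathcomp Require Import all_boot all_order all_algebra.
From mathcomp Require Export fraction.
Set Implicit Arguments. Unset Strict Implicit. Unset Printing Implicit Defensive.
Import GRing.Theory.
Local Open Scope ring_scope.

Definition Qxy : idomainType := {poly {poly rat}}.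
Definition Qfxy : fieldType := {fraction Qxy}.
(* the indeterminate x (inner variable, as a constant in y) *)
Definition X : Qfxy := FracField.tofrac (('X : {poly rat})%:P : Qxy).
Definition Y : Qfxy := FracField.tofrac ('X : Qxy).

(* Main.v *)
Require Import Defs.
From mathcomp Require Import all_boot all_order all_algebra.
From mathcomp Require Import ring zify.
Import GRing.Theory.
Local Open Scope ring_scope.

Lemma pneq0 (R : nzRingType) (p : {poly R}) : p`_0 != 0 -> p != 0.
Proof. by apply: contra => /eqP ->; rewrite coef0. Qed.

Lemma tofrac_neq0 (p : {poly {poly rat}}) : p != 0 -> FracField.tofrac (p : Qxy) != 0 :> Qfxy.
Proof. by move=> h; rewrite -tofrac0 tofrac_eq. Qed.

Lemma oneX : (1 - 'X : {poly rat}) != 0.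
Proof. by apply: pneq0; rewrite coefD coefN coef1 coefX. Qed.

Lemma uX : 1 - X != 0.
Proof.
rewrite /X -tofrac1 -rmorphB; apply: (@tofrac_neq0 (1 - ('X : {poly rat})%:P)).
by rewrite -polyCB polyC_eq0 oneX.
Qed.

Lemma uY : 1 - Y != 0.
Proof.
rewrite /Y -tofrac1 -rmorphB; apply: (@tofrac_neq0 (1 - 'X)).
by apply: pneq0; rewrite coefD coefN coef1 coefX /= ?subr0 ?oner_eq0.
Qed.

Lemma uXY : 1 - X * Y != 0.
Proof.
rewrite /X /Y -tofrac1 -rmorphM -rmorphB; apply: (@tofrac_neq0 (1 - ('X : {poly rat})%:P * 'X)).
by apply: pneq0; rewrite coefD coefN coef1 coefMX /= ?subr0 ?oner_eq0.
Qed.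

Definition fc (m r s : nat) : nat := 'C(m.+1 - r, s) * 'C(m - s, r).

Lemma fc_inter m r s :
  (fc m.+2 r.+1 s.+1 + fc m r s = fc m.+1 r.+1 s.+1 + fc m.+1 r s.+1 + fc m.+1 r.+1 s)%N.
Proof.
rewrite /fc.
case: (leqP r m.+1) => hr; last first.
  have h1 : 'C(m.+2 - s.+1, r.+1) = 0%N by apply: bin_small; lia.
  have h2 : 'C(m - s, r) = 0%N by apply: bin_small; lia.
  have h3 : 'C(m.+1 - s.+1, r.+1) = 0%N by apply: bin_small; lia.
  have h4 : 'C(m.+1 - s.+1, r) = 0%N by apply: bin_small; lia.
  have h5 : 'C(m.+1 - s, r.+1) = 0%N by apply: bin_small; lia.
  by rewrite ?h1 ?h2 ?h3 ?h4 ?h5 ?muln0.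
case: (leqP s m) => hs; last first.
  have e1 : (m.+2 - s.+1 = 0)%N by lia.
  have e2 : (m.+1 - s.+1 = 0)%N by lia.
  have e3 : (m.+1 - s = 0)%N by lia.
  have e4 : (m - s = 0)%N by lia.
  rewrite ?e1 ?e2 ?e3 ?e4 !bin0n.
  case: r hr => [|r] hr /=; rewrite ?muln0 ?muln1 ?addn0 ?add0n ?subn0 //.
  case: (ltngtP s m.+1) => h; first lia.
    by rewrite !bin_small //; lia.
  by rewrite h !binn.
set p := (m.+1 - r)%N; set q := (m - s)%N.
have -> : (m.+3 - r.+1 = p.+1)%N by rewrite /p; lia.
have -> : (m.+2 - s.+1 = q.+1)%N by rewrite /q; lia.
have -> : (m.+2 - r.+1 = p)%N by rewrite /p; lia.
have -> : (m.+1 - s.+1 = q)%N by rewrite /q; lia.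
have -> : (m.+2 - r = p.+1)%N by rewrite /p; lia.
have -> : (m.+1 - s = q.+1)%N by rewrite /q; lia.
rewrite !binS. ring.
Qed.

Section SumS.
Variable R : comNzRingType.
Variables a b : R.

Definition Ssum (h : nat -> nat -> R) (n1 n2 : nat) : R :=
  \sum_(0 <= r < n1) \sum_(0 <= s < n2) h r s * (a ^+ r * b ^+ s).

Definition shr (h : nat -> nat -> R) r s := if r is r'.+1 then h r' s else 0.
Definition shs (h : nat -> nat -> R) r s := if s is s'.+1 then h r s' else 0.

Lemma S_add h g n1 n2 : Ssum (fun r s => h r s + g r s) n1 n2 = Ssum h n1 n2 + Ssum g n1 n2.
Proof.
rewrite /Ssum -big_split /=; apply: eq_bigr => r _.
by rewrite -big_split /=; apply: eq_bigr => s _; rewrite mulrDl.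
Qed.

Lemma S_shr h n1 n2 : a * Ssum h n1 n2 = Ssum (shr h) n1.+1 n2.
Proof.
rewrite /Ssum big_nat_recl //.
have -> : \sum_(0 <= s < n2) shr h 0 s * (a ^+ 0 * b ^+ s) = 0.
  by apply: big1 => i _; rewrite /shr /= mul0r.
rewrite add0r.
rewrite mulr_sumr; apply: eq_bigr => r _; rewrite mulr_sumr; apply: eq_bigr => s _.
by rewrite /shr exprS; ring.
Qed.

Lemma S_shs h n1 n2 : b * Ssum h n1 n2 = Ssum (shs h) n1 n2.+1.
Proof.
rewrite /Ssum mulr_sumr; apply: eq_bigr => r _.
rewrite big_nat_recl // /shs mul0r add0r mulr_sumr; apply: eq_bigr => s _.
by rewrite exprS; ring.
Qed.

Definition vanish (h : nat -> nat -> R) n1 n2 :=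
  forall r s, (n1 <= r)%N \/ (n2 <= s)%N -> h r s = 0.

Lemma S_ext1 h n1 n2 : (forall s, h n1 s = 0) -> Ssum h n1.+1 n2 = Ssum h n1 n2.
Proof.
move=> Hc; rewrite /Ssum big_nat_recr //= [X in _ + X]big1 ?addr0 // => s _.
by rewrite Hc mul0r.
Qed.

Lemma S_ext2 h n1 n2 : (forall r, h r n2 = 0) -> Ssum h n1 n2.+1 = Ssum h n1 n2.
Proof.
move=> Hc; rewrite /Ssum; apply: eq_bigr => r _.
by rewrite big_nat_recr //= Hc mul0r addr0.
Qed.

Lemma S_ext h n1 n2 N1 N2 : (n1 <= N1)%N -> (n2 <= N2)%N -> vanish h n1 n2 ->
  Ssum h N1 N2 = Ssum h n1 n2.
Proof.
move=> h1 h2 V.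
rewrite -(subnKC h1) -(subnKC h2).
elim: (N2 - n2)%N => [|k IH].
  elim: (N1 - n1)%N => [|k IH]; first by rewrite !addn0.
  by rewrite addnS S_ext1 // => s; apply: V; left; rewrite leq_addr.
by rewrite addnS S_ext2 // => r; apply: V; right; rewrite leq_addr.
Qed.

Lemma vanish_shr h n1 n2 : vanish h n1 n2 -> vanish (shr h) n1.+1 n2.
Proof. by move=> V [|r] s //= Hc; apply: V; case: Hc; [left|right]. Qed.

Lemma vanish_shs h n1 n2 : vanish h n1 n2 -> vanish (shs h) n1 n2.+1.
Proof. by move=> V r [|s] //= Hc; apply: V; case: Hc; [left|right]. Qed.

Lemma vanish_mono h n1 n2 N1 N2 : (n1 <= N1)%N -> (n2 <= N2)%N -> vanish h n1 n2 -> vanish h N1 N2.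
Proof.
move=> h1 h2 V r s [Hc|Hc]; apply: V; [left|right]; exact: leq_trans Hc.
Qed.

Definition fcR m r s : R := (fc m r s)%:R.

Lemma vanish_fc m : vanish (fcR m) m.+2 m.+2.
Proof.
move=> r s [Hc|Hc]; rewrite /fcR /fc.
  by rewrite [X in (_ * X)%N]bin_small ?muln0 //; lia.
by rewrite bin_small //; lia.
Qed.

Definition Gs m := Ssum (fcR m) m.+2 m.+2.

Lemma G_rec m : Gs m.+2 + a * b * Gs m = Gs m.+1 + a * Gs m.+1 + b * Gs m.+1.
Proof.
rewrite /Gs -mulrA S_shs S_shr S_shr S_shs.
pose K := m.+4.
rewrite -(@S_ext (fcR m.+2) _ _ K K) //; last exact: vanish_fc.
rewrite -(@S_ext (shr (shs (fcR m))) _ _ K K) //; last by apply: vanish_shr; apply: vanish_shs; exact: vanish_fc.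
rewrite -(@S_ext (fcR m.+1) _ _ K K) //; last exact: vanish_fc.
rewrite -(@S_ext (shr (fcR m.+1)) _ _ K K) //; last by apply: vanish_shr; exact: vanish_fc.
rewrite -(@S_ext (shs (fcR m.+1)) _ _ K K) //; last by apply: vanish_shs; exact: vanish_fc.
rewrite -!S_add /Ssum; apply: eq_bigr => r _; apply: eq_bigr => s _; congr (_ * _).
rewrite /shr /shs /fcR; case: r => [|r]; case: s => [|s]; rewrite ?addr0 -?natrD.
- by rewrite /fc !subn0 !bin0.
- by rewrite /fc !subn0 !bin0 !muln1 binS natrD.
- by rewrite /fc !bin0 !mul1n binS.
- by rewrite fc_inter.
Qed.

End SumS.


Section Gen.
Variable F : fieldType.
Variables x y : F.
Hypotheses (hx : 1 - x != 0) (hy : 1 - y != 0) (hxy : 1 - x * y != 0).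

Definition w : F := ((1 - x) * (1 - y))^-1.
Definition aa : F := x * w.
Definition bb : F := y * w.

Lemma root_rec (l : F) : l ^+ 2 + aa * bb = (1 + aa + bb) * l ->
  forall n, l ^+ n.+2 + aa * bb * l ^+ n = (1 + aa + bb) * l ^+ n.+1.
Proof.
move=> h n; rewrite !exprS.
have -> : l * (l * l ^+ n) = l ^+ 2 * l ^+ n by rewrite expr2 mulrA.
by rewrite -mulrDl h; ring.
Qed.

Lemma w_root : w ^+ 2 + aa * bb = (1 + aa + bb) * w.
Proof.
rewrite /aa /bb /w.
by field; rewrite ?hx ?hy ?hxy.
Qed.

Lemma w2_root : (x * y * w) ^+ 2 + aa * bb = (1 + aa + bb) * (x * y * w).
Proof. rewrite /aa /bb /w. by field; rewrite ?hx ?hy ?hxy. Qed.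

Definition al : F := (1 - x) / (1 - x * y).
Definition be : F := x * (1 - y) / (1 - x * y).
Definition Hc (m : nat) : F := al * w ^+ m.+1 + be * (x * y * w) ^+ m.+1.

Lemma H_rec m : Hc m.+2 + aa * bb * Hc m = Hc m.+1 + aa * Hc m.+1 + bb * Hc m.+1.
Proof.
have e1 := @root_rec w w_root m.+1.
have e2 := @root_rec _ w2_root m.+1.
have -> : Hc m.+1 + aa * Hc m.+1 + bb * Hc m.+1 = (1 + aa + bb) * Hc m.+1 by ring.
rewrite /Hc.
transitivity (al * (w ^+ m.+3 + aa * bb * w ^+ m.+1) + be * ((x * y * w) ^+ m.+3 + aa * bb * (x * y * w) ^+ m.+1)).
  ring.
rewrite e1 e2; ring.
Qed.

Lemma G0 : Gs _ aa bb 0 = Hc 0.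
Proof.
rewrite /Gs /Ssum.
rewrite big_nat_recr //= big_nat_recr //= big_geq // add0r.
rewrite big_nat_recr //= big_nat_recr //= big_geq // add0r.
rewrite big_nat_recr //= big_nat_recr //= big_geq // add0r.
rewrite /fcR.
have -> : fc 0 0 0 = 1%N by []. have -> : fc 0 0 1 = 1%N by [].
have -> : fc 0 1 0 = 0%N by []. have -> : fc 0 1 1 = 0%N by [].
rewrite /Hc /al /be /aa /bb /w !expr0 !expr1 !mul0r !addr0 !mul1r.
by field; rewrite ?hx ?hy ?hxy.
Qed.
Lemma G1 : Gs _ aa bb 1 = Hc 1.
Proof.
rewrite /Gs /Ssum.
rewrite big_nat_recr //= big_nat_recr //= big_nat_recr //= big_geq // add0r.
rewrite big_nat_recr //= big_nat_recr //= big_nat_recr //= big_geq // add0r.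
rewrite big_nat_recr //= big_nat_recr //= big_nat_recr //= big_geq // add0r.
rewrite big_nat_recr //= big_nat_recr //= big_nat_recr //= big_geq // add0r.
rewrite /fcR.
have -> : fc 1 0 0 = 1%N by []. have -> : fc 1 0 1 = 2%N by [].
have -> : fc 1 0 2 = 1%N by []. have -> : fc 1 1 0 = 1%N by [].
have -> : fc 1 1 1 = 0%N by []. have -> : fc 1 1 2 = 0%N by [].
have -> : fc 1 2 0 = 0%N by []. have -> : fc 1 2 1 = 0%N by [].
have -> : fc 1 2 2 = 0%N by [].
rewrite /Hc /al /be /aa /bb /w !mul0r !addr0.
by field; rewrite ?hx ?hy ?hxy.
Qed.

Lemma G_H m : Gs _ aa bb m = Hc m.
Proof.
suff : Gs _ aa bb m = Hc m /\ Gs _ aa bb m.+1 = Hc m.+1 by case.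
elim: m => [|m [IH1 IH2]]; first by split; [exact: G0 | exact: G1].
split => //.
apply: (addIr (aa * bb * Gs _ aa bb m)).
by rewrite G_rec IH1 IH2 H_rec.
Qed.

Lemma term_eq (n r s : nat) :
  n%:R * (x ^+ r * y ^+ s) / ((1 - x) ^+ (r + s) * (1 - y) ^+ (r + s))
  = n%:R * (aa ^+ r * bb ^+ s).
Proof.
rewrite /aa /bb /w -[(1 - x) ^+ (r + s) * _]exprMn -exprVn exprD.
move: (((1 - x) * (1 - y))^-1) => c. rewrite !exprMn. move: (x ^+ r) (y ^+ s) (c ^+ r) (c ^+ s) => A B C D. ring.
Qed.

Lemma G_split m : Gs _ aa bb m =
  \sum_(0 <= r < m.+1) \sum_(0 <= s < (m - r).+1) (fc m r s)%:R * (aa ^+ r * bb ^+ s)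
  + bb ^+ m.+1.
Proof.
rewrite /Gs /Ssum big_nat_recr //=.
rewrite [X in _ + X]big1 ?addr0; last first.
  move=> s _; rewrite /fcR /fc [X in (_ * X)%N]bin_small ?muln0 ?mul0r //; lia.
have -> : \sum_(0 <= r < m.+1) \sum_(0 <= s < m.+2) fcR F m r s * (aa ^+ r * bb ^+ s)
  = \sum_(0 <= r < m.+1) (\sum_(0 <= s < (m - r).+1) (fc m r s)%:R * (aa ^+ r * bb ^+ s)
      + \sum_((m - r).+1 <= s < m.+2) (fc m r s)%:R * (aa ^+ r * bb ^+ s)).
  apply: eq_big_nat => r /andP[_ hr].
  rewrite (@big_cat_nat _ _ _ (m - r).+1) //=; lia.
rewrite big_split /=; congr (_ + _).
rewrite big_nat_recl // [X in _ + X]big1 ?addr0; last first.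
  move=> r _; rewrite big_nat_cond big1 // => s /andP[/andP[h1 h2] _].
  rewrite /fc [X in (_ * X)%N]bin_small ?muln0 ?mul0r //; lia.
rewrite subn0 big_nat1 /fc subn0 binn bin0 muln1 expr0 !mul1r.
by [].
Qed.

Theorem main_gen (m : nat) :
  \sum_(0 <= r < m.+1) \sum_(0 <= s < (m - r).+1)
     ('C(m - r + 1, s) * 'C(m - s, r))%:R * (x ^+ r * y ^+ s)
       / ((1 - x) ^+ (r + s) * (1 - y) ^+ (r + s))
  = (1 - x ^+ (m + 2) * y ^+ (m + 2) - x * (1 - x ^+ (m + 1) * y ^+ (m + 1))
       - (1 - x * y) * y ^+ (m + 1))
    / ((1 - x * y) * (1 - x) ^+ (m + 1) * (1 - y) ^+ (m + 1)).
Proof.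
have -> : \sum_(0 <= r < m.+1) \sum_(0 <= s < (m - r).+1)
     ('C(m - r + 1, s) * 'C(m - s, r))%:R * (x ^+ r * y ^+ s)
       / ((1 - x) ^+ (r + s) * (1 - y) ^+ (r + s))
   = \sum_(0 <= r < m.+1) \sum_(0 <= s < (m - r).+1) (fc m r s)%:R * (aa ^+ r * bb ^+ s).
  apply: eq_big_nat => r /andP[_ hr]; apply: eq_bigr => s _.
  rewrite term_eq /fc; congr (_%:R * _).
  by have -> : (m - r + 1 = m.+1 - r)%N by lia.
rewrite (_ : \sum_(0 <= r < m.+1) \sum_(0 <= s < (m - r).+1) (fc m r s)%:R * (aa ^+ r * bb ^+ s)
   = Hc m - bb ^+ m.+1); last by rewrite -G_H G_split addrK.
rewrite /Hc /al /be /aa /bb /w !exprMn !exprVn !exprMn.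
rewrite !addn2 !addn1 (exprS x m.+1) (exprS y m.+1).
have hu : (1 - x) ^+ m.+1 != 0 by rewrite expf_neq0.
have hv : (1 - y) ^+ m.+1 != 0 by rewrite expf_neq0.
move: hu hv.
move: ((1 - x) ^+ m.+1) ((1 - y) ^+ m.+1) (x ^+ m.+1) (y ^+ m.+1) => U V P Q hu hv.
by field; rewrite ?hx ?hy ?hxy ?hu ?hv.
Qed.
End Gen.

Theorem corollary2p5 (m : nat) :
  \sum_(0 <= r < m.+1) \sum_(0 <= s < (m - r).+1)
     ('C(m - r + 1, s) * 'C(m - s, r))%:R * (X ^+ r * Y ^+ s)
       / ((1 - X) ^+ (r + s) * (1 - Y) ^+ (r + s))
  = (1 - X ^+ (m + 2) * Y ^+ (m + 2) - X * (1 - X ^+ (m + 1) * Y ^+ (m + 1))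
       - (1 - X * Y) * Y ^+ (m + 1))
    / ((1 - X * Y) * (1 - X) ^+ (m + 1) * (1 - Y) ^+ (m + 1)) :> Qfxy.
Proof.
exact: (@main_gen Qfxy X Y uX uY uXY m).
Qed.
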